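(* Let $(E,\mathcal{I})$ be a $p$-system for an integer $p\ge 1$. Suppose the utility function $f:2^E\times O^E\to\mathbb{R}_{\ge0}$ is worst-case monotone and worst-case submodular with respect to the prior $p(\phi)$, and satisfies minimal dependency. Let $\pi^w$ be the adaptive worst-case greedy policy for $(E,\mathcal{I})$ and let $\pi^*_{wc}$ be an optimal worst-case policy for $(E,\mathcal{I})$. Then $$f_{wc}(\pi^w)\ \ge\ \frac{1}{p+1}\,f_{wc}(\pi^*_{wc}).$$
   Context: Setting. $E$ is a finite set of $n$ items and $O$ a finite set of states. A realization is a function $\phi:E\to O$; $p$ is a probability distribution (prior) on the set of all realizations, $\Phi$ denotes a random realization with law $p$, and $U^+=\{\phi: p(\phi)>0\}$. A partial realization is a function $\psi:S\to O$ with $S\subseteq E$, $\mathrm{dom}(\psi)=S$; it is identified with the set of pairs $\{(e,\psi(e)):e\in S\}$, so $\psi\subseteq\psi'$ means $\mathrm{dom}(\psi)\subseteq\mathrm{dom}(\psi')$ and they agree on $\mathrm{dom}(\psi)$. A realization $\phi$ is consistent with $\psi$, written $\phi\sim\psi$, if it agrees with $\psi$ on $\mathrm{dom}(\psi)$. Only partial realizations with $\Pr[\Phi\sim\psi]>0$ are considered, and $p(\phi\mid\psi)=\Pr[\Phi=\phi\mid\Phi\sim\psi]$. For $S\subseteq E$ and a partial realization $\psi$, $f(S,\psi)=\mathbb{E}[f(S,\Phi)\mid\Phi\sim\psi]$. For $e\notin\mathrm{dom}(\psi)$, let $O(e,\psi)=\{o\in O:\exists\phi\text{ with }p(\phi\mid\psi)>0,\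 \phi(e)=o\}$ and define the worst-case marginal utility $f_{wc}(e\mid\psi)=\min_{o\in O(e,\psi)}\{f(\mathrm{dom}(\psi)\cup\{e\},\psi\cup\{(e,o)\})-f(\mathrm{dom}(\psi),\psi)\}$. $f$ is worst-case submodular if $f_{wc}(e\mid\psi)\ge f_{wc}(e\mid\psi')$ for all partial realizations $\psi\subseteq\psi'$ and all $e\in E\setminus\mathrm{dom}(\psi')$; it is worst-case monotone if $f_{wc}(e\mid\psi)\ge0$ for all $\psi$ and $e\notin\mathrm{dom}(\psi)$. $f$ satisfies minimal dependency if $f(\mathrm{dom}(\psi),\psi)=f(\mathrm{dom}(\psi),\phi)$ for every partial realization $\psi$ and every $\phi\in U^+$ with $\phi\sim\psi$. Policies. A (deterministic) policy $\pi$ is a rule which, given the current observation (the partial realization of the items selected so far), either selects a new item or stops; after an item $e$ is selected under realization $\phi$, the state $\phi(e)$ is observed. $E(\pi,\phi)$ is the set of items selected by $\pi$ under $\phi$. The worst-case utility is $f_{wc}(\pi)=\min_{\phi\in U^+}f(E(\pi,\phi),\phi)$. Independence systems. $(E,\mathcal{I})$ with $\mathcal{I}\subseteq 2^E$ is an independence system if $\emptyset\in\mathcal{I}$ and $\mathcal{I}$ is downward closed. For $R\subseteq E$, a base of $R$ is a maximal (under inclusion) set $B\subseteq R$ with $B\in\mathcal{I}$. $(E,\mathcal{I})$ is a $p$-system if for every $R\subseteq E$, $p\cdot\min_B|B|\ge\max_B|B|$, the min and max over bases $B$ of $R$. An optimal worst-case policy $\pi^*_{wc}$ for $(E,\mathcal{I})$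 maximizes $f_{wc}(\pi)$ over all policies $\pi$ with $E(\pi,\phi)\in\mathcal{I}$ for all $\phi\in U^+$. Adaptive worst-case greedy policy $\pi^w$: start with $\psi_0=\emptyset$; at step $t=1,2,\dots$ let $V_t=\{e\in E\setminus\mathrm{dom}(\psi_{t-1}): \mathrm{dom}(\psi_{t-1})\cup\{e\}\in\mathcal{I}\}$; if $V_t=\emptyset$ stop; otherwise select $e_t\in\arg\max_{e\in V_t}f_{wc}(e\mid\psi_{t-1})$ (ties broken arbitrarily), observe $\Phi(e_t)$ and set $\psi_t=\psi_{t-1}\cup\{(e_t,\Phi(e_t))\}$. *)

(* Defs.v *)
From HB Require Import structures.
From mathcomp Require Import all_boot all_order all_algebra.
Set Implicit Arguments. Unset Strict Implicit. Unset Printing Implicit Defensive.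
Import Order.TTheory GRing.Theory Num.Theory.
Local Open Scope ring_scope.

Section AdaptiveDefs.
Variables (E O : finType) (R : realFieldType).

Definition realization := {ffun E -> O}.
(* partial realizations: psi e = Some o iff e \in dom psi and psi(e) = o *)
Definition prealization := {ffun E -> option O}.

Definition dom (psi : prealization) : {set E} := [set e | psi e != None].

Definition consistent (phi : realization) (psi : prealization) : bool :=
  [forall e, if psi e is Some o then phi e == o else true].

Definition subpr (psi psi' : prealization) : bool :=
  [forall e, if psi e is Some o then psi' e == Some o else true].

Definition pr0 : prealization := [ffun=> None].

Definition extend (psi : prealization) (e : E) (o : O) : prealization :=
  [ffun x => if x == e then Some o else psi x].

Variable p : realization -> R.

Definition is_prior : Prop := (forall phi, 0 <= p phi) /\ \sum_phi p phi = 1.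

Definition prob_cons (psi : prealization) : R :=
  \sum_(phi | consistent phi psi) p phi.

Definition feasible (psi : prealization) : bool := 0 < prob_cons psi.

Definition cond_prob (phi : realization) (psi : prealization) : R :=
  if consistent phi psi then p phi / prob_cons psi else 0.

Variable f : {set E} -> realization -> R.

Definition condf (S : {set E}) (psi : prealization) : R :=
  (\sum_(phi | consistent phi psi) p phi * f S phi) / prob_cons psi.

Definition Oset (e : E) (psi : prealization) : {set O} :=
  [set o | [exists phi, (0 < cond_prob phi psi) && (phi e == o)]].

Definition marg (e : E) (psi : prealization) (o : O) : R :=
  condf (e |: dom psi) (extend psi e o) - condf (dom psi) psi.

(* worst-case marginal utility f_wc(e | psi): minimum over the (nonempty for
   feasible psi) finite set O(e,psi); the fold is seeded by an element of the
   set, so it is exactly the minimum. Value 0 if the set is empty. *)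
Definition fwc_e (e : E) (psi : prealization) : R :=
  match [pick o in Oset e psi] with
  | Some o0 => \big[Num.min/marg e psi o0]_(o in Oset e psi) marg e psi o
  | None => 0
  end.

Definition wc_submodular : Prop :=
  forall psi psi' e, feasible psi -> feasible psi' -> subpr psi psi' ->
    e \notin dom psi' -> fwc_e e psi' <= fwc_e e psi.

Definition wc_monotone : Prop :=
  forall psi e, feasible psi -> e \notin dom psi -> 0 <= fwc_e e psi.

Definition minimal_dependency : Prop :=
  forall psi phi, feasible psi -> 0 < p phi -> consistent phi psi ->
    condf (dom psi) psi = f (dom psi) phi.

(* deterministic policies: given the current observation, select an item
   (Some e) or stop (None). *)
Definition policy := prealization -> option E.

(* one step of the execution under realization phi; re-selecting an already
   selected item leaves the observation unchanged (a fixed point), i.e. acts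
   as stopping *)
Definition step (pi : policy) (phi : realization) (psi : prealization)
  : prealization :=
  if pi psi is Some e then extend psi e (phi e) else psi.

(* every effective step adds a new item, so #|E| steps reach the end *)
Definition run (pi : policy) (phi : realization) : prealization :=
  iter #|E| (step pi phi) pr0.

Definition selected (pi : policy) (phi : realization) : {set E} :=
  dom (run pi phi).

Definition fwc_pol (pi : policy) : R :=
  match [pick phi | 0 < p phi] with
  | Some phi0 => \big[Num.min/f (selected pi phi0) phi0]_(phi | 0 < p phi)
                    f (selected pi phi) phi
  | None => 0
  end.

Variable I : pred {set E}.

Definition independence_system : Prop :=
  I set0 /\ forall A B : {set E}, A \subset B -> I B -> I A.

Definition is_base (Rs B : {set E}) : Prop :=
  B \subset Rs /\ I B /\
  forall B' : {set E}, B \subset B' -> B' \subset Rs -> I B' -> B' = B.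

(* p-system (parameter k): k * min |B| >= max |B| over bases of every Rs,
   written pairwise over bases *)
Definition k_system (k : nat) : Prop :=
  independence_system /\
  forall Rs B1 B2 : {set E}, is_base Rs B1 -> is_base Rs B2 ->
    (#|B2| <= k * #|B1|)%N.

Definition admissible (pi : policy) : Prop :=
  forall phi, 0 < p phi -> I (selected pi phi).

Definition optimal_wc_policy (pi : policy) : Prop :=
  admissible pi /\ forall pi' : policy, admissible pi' -> fwc_pol pi' <= fwc_pol pi.

Definition wc_greedy (pi : policy) : Prop :=
  forall psi, feasible psi ->
    let V := [set e | (e \notin dom psi) && I (e |: dom psi)] in
    (pi psi = None <-> V = set0) /\
    (forall e, pi psi = Some e ->
       e \in V /\ forall e', e' \in V -> fwc_e e' psi <= fwc_e e psi).

End AdaptiveDefs.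

(* Main.v *)
Require Import Defs.
From HB Require Import structures.
From mathcomp Require Import all_boot all_order all_algebra.
From mathcomp Require Import zify ring lra.
Set Implicit Arguments. Unset Strict Implicit. Unset Printing Implicit Defensive.
Import Order.TTheory GRing.Theory Num.Theory.
Local Open Scope ring_scope.

Section Basics.
Variables (E O : finType) (R : realFieldType).
Variable p : {ffun E -> O} -> R.
Variable f : {set E} -> {ffun E -> O} -> R.
Hypothesis p_ge0 : forall phi, 0 <= p phi.

Lemma dom_extend (psi : prealization E O) e o : dom (extend psi e o) = e |: dom psi.
Proof.
apply/setP=> x; rewrite !inE ffunE; case: (x =P e) => //= ->; by [].
Qed.

Lemma in_dom (psi : prealization E O) e : (e \in dom psi) = (psi e != None).
Proof. by rewrite inE. Qed.

Lemma consistentP (phi : realization E O) psi e o :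
  consistent phi psi -> psi e = Some o -> phi e = o.
Proof. by move=> /forallP /(_ e); case: (psi e) => // o' /eqP -> [->]. Qed.

Lemma consistent_extend (phi : realization E O) psi e :
  consistent phi psi -> consistent phi (extend psi e (phi e)).
Proof.
move=> /forallP H; apply/forallP=> x; rewrite ffunE; case: eqP => [->|_] //; try exact: H.
Qed.

Lemma consistent_sub (phi : realization E O) psi psi' :
  subpr psi psi' -> consistent phi psi' -> consistent phi psi.
Proof.
move=> /forallP Hs /forallP Hc; apply/forallP=> x.
move: (Hs x) (Hc x); case: (psi x) => // o /eqP ->; done.
Qed.

Lemma subpr_refl (psi : prealization E O) : subpr psi psi.
Proof. by apply/forallP=> x; case: (psi x). Qed.

Lemma subpr_trans (a b c : prealization E O) : subpr a b -> subpr b c -> subpr a c.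
Proof.
move=> /forallP H1 /forallP H2; apply/forallP=> x.
move: (H1 x) (H2 x); case: (a x) => // o /eqP ->; done.
Qed.

Lemma subpr_extend (psi : prealization E O) e o :
  (psi e == None) || (psi e == Some o) -> subpr psi (extend psi e o).
Proof.
move=> H; apply/forallP=> x; rewrite ffunE; case: eqP => [->|_].
  by case/orP: H => /eqP ->.
by case: (psi x).
Qed.

Lemma subpr_dom (a b : prealization E O) : subpr a b -> dom a \subset dom b.
Proof.
move=> /forallP H; apply/subsetP=> x; rewrite !inE; move: (H x).
by case: (a x) => // o /eqP ->.
Qed.

Lemma extend_id (psi : prealization E O) e o : psi e = Some o -> extend psi e o = psi.
Proof. by move=> H; apply/ffunP=> x; rewrite ffunE; case: eqP => [->|]. Qed.

Lemma prob_cons_ge (phi : realization E O) psi :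
  consistent phi psi -> p phi <= prob_cons p psi.
Proof.
move=> Hc; rewrite /prob_cons (bigD1 phi) //= lerDl.
by apply: sumr_ge0 => i _; exact: p_ge0.
Qed.

Lemma feasible_cons (phi : realization E O) psi :
  consistent phi psi -> 0 < p phi -> feasible p psi.
Proof. by move=> Hc Hp; rewrite /feasible; apply: lt_le_trans Hp (prob_cons_ge Hc). Qed.

Lemma feasible_ex psi : feasible p psi -> exists phi, consistent phi psi && (0 < p phi).
Proof.
move=> Hf; case: (boolP [exists phi, consistent phi psi && (0 < p phi)]) => [/existsP //|/existsPn H].
move: Hf; rewrite /feasible /prob_cons big1 ?ltxx // => phi Hc.
by apply/eqP; rewrite eq_le p_ge0 andbT leNgt; move: (H phi); rewrite Hc.
Qed.

Lemma mem_Oset (phi : realization E O) psi e :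
  consistent phi psi -> 0 < p phi -> e \in dom psi = false -> phi e \in Oset p e psi.
Proof.
move=> Hc Hp _; rewrite inE; apply/existsP; exists phi; rewrite eqxx andbT.
rewrite /cond_prob Hc divr_gt0 //; exact: feasible_cons Hc Hp.
Qed.

Lemma Oset_feasible psi e o : o \in Oset p e psi -> feasible p (extend psi e o).
Proof.
rewrite inE => /existsP [phi /andP [H /eqP He]].
move: H; rewrite /cond_prob; case: ifP => Hc; last by rewrite ltxx.
move=> H; apply: (@feasible_cons phi); first by rewrite -He; exact: consistent_extend.
rewrite lt_def p_ge0 andbT; apply/eqP=> H0; move: H; rewrite H0 mul0r ltxx //.
Qed.

Lemma fwc_le psi e o : o \in Oset p e psi -> fwc_e p f e psi <= marg p f e psi o.
Proof.
move=> Ho; rewrite /fwc_e; case: pickP => [o0 Ho0|]; last by move/(_ o); rewrite Ho.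
exact: (bigmin_le_cond _ (fun o => marg p f e psi o) Ho).
Qed.

Lemma fwc_attained psi e o : o \in Oset p e psi ->
  exists2 o', o' \in Oset p e psi & marg p f e psi o' = fwc_e p f e psi.
Proof.
move=> Ho; rewrite /fwc_e; case: pickP => [o0 Ho0|]; last by move/(_ o); rewrite Ho.
pose P y := exists2 o', o' \in Oset p e psi & marg p f e psi o' = y.
apply: (@big_ind _ P); first by exists o0.
  move=> x y [a Ha <-] [b Hb <-]; rewrite /Num.min; case: ifP => _.
  by exists a. by exists b.
by move=> i Hi; exists i.
Qed.

End Basics.

Section Mono.
Variables (E O : finType) (R : realFieldType).
Variable p : {ffun E -> O} -> R.
Variable f : {set E} -> {ffun E -> O} -> R.
Hypothesis p_ge0 : forall phi, 0 <= p phi.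
Hypothesis Hmon : wc_monotone p f.
Hypothesis Hmd : minimal_dependency p f.

Definition restr (phi : realization E O) (A : {set E}) : prealization E O :=
  [ffun x => if x \in A then Some (phi x) else None].

Lemma dom_restr phi A : dom (restr phi A) = A.
Proof. by apply/setP=> x; rewrite !inE ffunE; case: (x \in A). Qed.

Lemma consistent_restr phi A : consistent phi (restr phi A).
Proof. by apply/forallP=> x; rewrite ffunE; case: (x \in A). Qed.

Lemma extend_restr phi A e : extend (restr phi A) e (phi e) = restr phi (e |: A).
Proof.
apply/ffunP=> x; rewrite !ffunE !inE; case: eqP => [->|] //=.
Qed.

Lemma condf_md (phi : realization E O) psi :
  consistent phi psi -> 0 < p phi -> condf p f (dom psi) psi = f (dom psi) phi.
Proof. move=> Hc Hp; apply: Hmd => //; exact: feasible_cons Hc Hp. Qed.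

Lemma mono1 phi (A : {set E}) e : 0 < p phi -> f A phi <= f (e |: A) phi.
Proof.
move=> Hp; case: (boolP (e \in A)) => HeA; first by have -> : e |: A = A by apply/setUidPr; rewrite sub1set.
have Hc := consistent_restr phi A.
have Hf := feasible_cons p_ge0 Hc Hp.
have H1 := condf_md Hc Hp; rewrite dom_restr in H1.
have Hc2 := consistent_restr phi (e |: A).
have H2 := condf_md Hc2 Hp; rewrite dom_restr in H2.
have Hd : e \notin dom (restr phi A) by rewrite dom_restr.
have := Hmon Hf Hd.
have Ho : phi e \in Oset p e (restr phi A).
  by apply: (mem_Oset p_ge0 Hc Hp); rewrite dom_restr (negbTE HeA).
move/le_trans/(_ (fwc_le f Ho)).
rewrite /marg extend_restr dom_restr H1 H2 subr_ge0 //.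
Qed.

Lemma mono phi (A B : {set E}) : 0 < p phi -> A \subset B -> f A phi <= f B phi.
Proof.
move=> Hp; move Hn : #|B :\: A| => n; elim: n A Hn => [|n IH] A Hn HAB.
  have -> : B = A; last by [].
  apply/eqP; rewrite eqEsubset HAB andbT -setD_eq0; apply/eqP.
  exact: cards0_eq.
have : (0 < #|B :\: A|)%N by rewrite Hn.
case/card_gt0P=> e; rewrite inE => /andP [HeA HeB].
apply: le_trans (mono1 A e Hp) _; apply: IH.
  have : #|B :\: A| = #|B :\: (e |: A)|.+1.
    rewrite (cardsD1 e (B :\: A)) inE HeA HeB add1n; congr (_.+1); apply: eq_card => x.
    by rewrite !inE; case: (x == e); rewrite ?andbF //.
  by rewrite Hn => [[]].
by apply/subsetP=> x; rewrite !inE => /orP [/eqP ->|/(subsetP HAB)].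
Qed.

End Mono.

Section Abel.
Variables (E : finType) (R : realFieldType).
Variables (A : {set E}) (sg : E -> nat) (D : nat -> R) (k N : nat).
Hypothesis D_ge0 : forall t, 0 <= D t.
Hypothesis D_noninc : forall t, D t.+1 <= D t.
Hypothesis sg_lt : forall e, e \in A -> (sg e < N)%N.
Hypothesis Hcount : forall i, (i <= N)%N -> (#|[set e in A | (sg e < i)%N]| <= k * i)%N.

Let X i := [set e in A | (sg e < i)%N].
Let Y i := [set e in A | sg e == i].

Lemma split_X i (F : E -> R) :
  \sum_(e in X i.+1) F e = \sum_(e in X i) F e + \sum_(e in Y i) F e.
Proof.
rewrite (bigID (fun e => (sg e < i)%N)) /=; congr (_ + _); apply: eq_bigl => e;
  rewrite !inE; case: (e \in A) => //=; rewrite ltnS; case: ltngtP => //.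
Qed.

Lemma card_X i : (#|X i|%:R : R) = \sum_(e in X i) 1.
Proof. by rewrite sumr_const. Qed.

Lemma abel_aux i : (i <= N)%N ->
  \sum_(e in X i) D (sg e) + ((k * i)%:R - #|X i|%:R) * D i
    <= k%:R * \sum_(t < i) D t.
Proof.
elim: i => [|i IH] Hi.
  have -> : X 0 = set0 by apply/setP=> e; rewrite !inE ltn0 andbF.
  by rewrite big_set0 cards0 muln0 subrr mul0r addr0 big_ord0 mulr0.
have IH' := IH (ltnW Hi).
have HY : \sum_(e in Y i) D (sg e) = #|Y i|%:R * D i.
  rewrite (eq_bigr (fun _ => D i)); last by move=> e; rewrite inE => /andP [_ /eqP ->].
  by rewrite sumr_const mulr_natl.
have HcY : (#|X i.+1|%:R : R) = #|X i|%:R + #|Y i|%:R.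
  by rewrite !card_X split_X !sumr_const.
have Hc : (0 : R) <= (k * i.+1)%:R - #|X i.+1|%:R.
  by rewrite subr_ge0 ler_nat; apply: Hcount.
have H1 := ler_wpM2l Hc (D_noninc i).
rewrite split_X HY big_ord_recr /=.
move: H1 IH'; rewrite HcY !natrM !mulrS.
set a := (#|X i|%:R : R); set b := (#|Y i|%:R : R); set d := D i; set d1 := D i.+1.
set s := \sum_(e in X i) D (sg e); set T := \sum_(t < i) D t.
move=> H1 IH'.
have -> : k%:R * (T + d) = k%:R * T + k%:R * d by ring.
nra.
Qed.

Lemma abel : \sum_(e in A) D (sg e) <= k%:R * \sum_(t < N) D t.
Proof.
have H := abel_aux (leqnn N).
have HX : X N = A.
  by apply/setP=> e; rewrite inE; case He: (e \in A) => //=; rewrite sg_lt.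
move: H; rewrite HX; set s := \sum_(e in A) _; move=> H.
have : 0 <= ((k * N)%:R - #|A|%:R) * D N.
  apply: mulr_ge0 => //; rewrite subr_ge0 ler_nat -{1}HX; exact: Hcount.
lra.
Qed.

End Abel.

Lemma dom_pr0 (E O : finType) : dom (pr0 E O) = set0.
Proof. by apply/setP=> x; rewrite !inE ffunE. Qed.

Section Greedy.
Variables (E O : finType) (R : realFieldType).
Variable p : {ffun E -> O} -> R.
Variable f : {set E} -> {ffun E -> O} -> R.
Variable I : pred {set E}.
Variable pi : policy E O.
Variable phi : realization E O.
Hypothesis p_ge0 : forall phi, 0 <= p phi.
Hypothesis f_ge0 : forall S phi, 0 <= f S phi.
Hypothesis Hmon : wc_monotone p f.
Hypothesis Hsub : wc_submodular p f.
Hypothesis Hmd : minimal_dependency p f.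
Hypothesis Hind : independence_system I.
Hypothesis Hg : wc_greedy p f I pi.
Hypothesis Hp : 0 < p phi.

Definition gpsi t := iter t (step pi phi) (pr0 E O).
Definition S t := dom (gpsi t).
Definition Vset (psi : prealization E O) :=
  [set e | (e \notin dom psi) && I (e |: dom psi)].
Definition Delta t := if pi (gpsi t) is Some e then fwc_e p f e (gpsi t) else 0.
Local Notation N := #|E|.

Lemma I_down (A B : {set E}) : A \subset B -> I B -> I A.
Proof. by case: Hind => _; apply. Qed.

Lemma gpsiS t : gpsi t.+1 = step pi phi (gpsi t).
Proof. by rewrite /gpsi iterS. Qed.

Lemma gpsi_cons t : consistent phi (gpsi t).
Proof.
elim: t => [|t IH]; first by apply/forallP=> x; rewrite ffunE.
rewrite gpsiS /step; case: (pi _) => // e; exact: consistent_extend.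
Qed.

Lemma gpsi_feas t : feasible p (gpsi t).
Proof. exact: (feasible_cons p_ge0 (gpsi_cons t) Hp). Qed.

Lemma greedyP psi : feasible p psi ->
  (pi psi = None <-> Vset psi = set0) /\
  (forall e, pi psi = Some e ->
     e \in Vset psi /\ forall e', e' \in Vset psi -> fwc_e p f e' psi <= fwc_e p f e psi).
Proof. exact: Hg. Qed.

Lemma gSome t e : pi (gpsi t) = Some e ->
  [/\ e \notin S t, I (e |: S t), S t.+1 = e |: S t &
      forall e', e' \in Vset (gpsi t) -> fwc_e p f e' (gpsi t) <= fwc_e p f e (gpsi t)].
Proof.
move=> H; have [_ /(_ e H) [HV Hmax]] := greedyP (gpsi_feas t).
move: HV; rewrite inE => /andP [H1 H2]; split => //.
by rewrite /S gpsiS /step H dom_extend.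
Qed.

Lemma gpsi_sub1 t : subpr (gpsi t) (gpsi t.+1).
Proof.
rewrite gpsiS /step; case H: (pi _) => [e|]; last exact: subpr_refl.
case: (gSome H) => He _ _ _; apply: subpr_extend.
by move: He; rewrite /S in_dom negbK => ->.
Qed.

Lemma gpsi_sub t s : (t <= s)%N -> subpr (gpsi t) (gpsi s).
Proof.
move/subnK <-; elim: (s - t)%N => [|m IH]; first exact: subpr_refl.
by rewrite addSn; apply: subpr_trans IH (gpsi_sub1 _).
Qed.

Lemma S_sub t s : (t <= s)%N -> S t \subset S s.
Proof. by move=> H; apply: subpr_dom; exact: gpsi_sub. Qed.

Lemma S_ind t : I (S t).
Proof.
elim: t => [|t IH]; first by rewrite /S /gpsi /= dom_pr0; case: Hind.
case H: (pi (gpsi t)) => [e|]; first by case: (gSome H) => _ ? -> _.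
by rewrite /S gpsiS /step H.
Qed.

Lemma gNone t m : pi (gpsi t) = None -> gpsi (m + t) = gpsi t.
Proof. by move=> H; elim: m => [|m IH] //; rewrite addSn gpsiS IH /step H. Qed.

Lemma S_card t : (#|S t| <= t)%N.
Proof.
elim: t => [|t IH]; first by rewrite /S /gpsi /= dom_pr0 cards0.
case H: (pi (gpsi t)) => [e|]; last by rewrite /S gpsiS /step H; apply: leqW.
by case: (gSome H) => _ _ -> _; rewrite cardsU1; case: (_ \notin _); lia.
Qed.

Lemma gstop : pi (gpsi N) = None.
Proof.
case HN: (pi (gpsi N)) => [e|] //; exfalso.
have Hall : forall t, (t <= N)%N -> pi (gpsi t) != None.
  move=> t Ht; apply/eqP=> Ht0; have := gNone (N - t) Ht0; rewrite subnK //.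
  by move=> /(f_equal pi); rewrite HN Ht0.
have Hc : forall t, (t <= N)%N -> #|S t| = t.
  elim=> [|t IH] Ht; first by rewrite /S /gpsi /= dom_pr0 cards0.
  move: (Hall t (ltnW Ht)); case H: (pi (gpsi t)) => [e'|] // _.
  case: (gSome H) => Hn _ -> _; rewrite cardsU1 Hn IH //; exact: ltnW.
case: (gSome HN) => Hn _ _ _; move: Hn.
have -> : S N = setT by apply/eqP; rewrite eqEcard subsetT cardsT Hc ?leqnn.
by rewrite inE.
Qed.

Lemma gpsi_after t : (N <= t)%N -> gpsi t = gpsi N.
Proof. by move=> H; rewrite -(subnK H); apply: gNone; exact: gstop. Qed.

Lemma VN : Vset (gpsi N) = set0.
Proof. by have [[H _] _] := greedyP (gpsi_feas N); apply: H; exact: gstop. Qed.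

Lemma Delta_ge0 t : 0 <= Delta t.
Proof.
rewrite /Delta; case H: (pi _) => [e|] //.
case: (gSome H) => He _ _ _; exact: Hmon (gpsi_feas t) He.
Qed.

Lemma Delta_noninc t : Delta t.+1 <= Delta t.
Proof.
rewrite {1}/Delta; case H: (pi (gpsi t.+1)) => [e'|]; last exact: Delta_ge0.
case H0: (pi (gpsi t)) => [e|]; last first.
  by move: H; rewrite gpsiS /step H0 H0.
rewrite /Delta H0.
case: (gSome H) => He' HI' _ _; case: (gSome H0) => _ _ HS Hmax.
apply: le_trans (Hsub (gpsi_feas t) (gpsi_feas t.+1) (gpsi_sub1 t) He') _.
apply: Hmax; rewrite inE; apply/andP; split.
  by apply: contra He'; apply: (subsetP (S_sub (leqnSn t))).
by apply: I_down HI'; apply: setUS; apply: S_sub.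
Qed.

Lemma greedy_value : \sum_(t < N) Delta t <= f (S N) phi.
Proof.
suff H : forall t, \sum_(s < t) Delta s <= f (S t) phi by [].
elim=> [|t IH]; first by rewrite big_ord0.
rewrite big_ord_recr /=.
suff : Delta t <= f (S t.+1) phi - f (S t) phi by move=> ?; lra.
rewrite /Delta; case H: (pi (gpsi t)) => [e|]; last by rewrite /S gpsiS /step H subrr.
have := condf_md p_ge0 Hmd (gpsi_cons t) Hp.
have := condf_md p_ge0 Hmd (gpsi_cons t.+1) Hp.
rewrite -/(S t) -/(S t.+1) => <- <-.
case: (gSome H) => He _ HS _.
have Ho : phi e \in Oset p e (gpsi t).
  apply: (mem_Oset p_ge0 (gpsi_cons t) Hp); exact: negbTE.
apply: le_trans (fwc_le f Ho) _; rewrite /marg.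
by rewrite /S gpsiS /step H dom_extend.
Qed.


Definition Pe e t := (e \in S t.+1) || ~~ I (e |: S t.+1).

Lemma Pe_ex e : exists t, Pe e t.
Proof.
exists N; rewrite /Pe /S (gpsi_after (leqnSn N)).
case: (boolP (e \in dom (gpsi N))) => //= He.
have : e \notin Vset (gpsi N) by rewrite VN inE.
by rewrite inE He.
Qed.

Definition sig e := ex_minn (Pe_ex e).

Lemma sig_V e : I [set e] -> e \in Vset (gpsi (sig e)).
Proof.
move=> HI; rewrite /sig; case: ex_minnP => m _ Hmin.
case: m Hmin => [|s] Hmin.
  by rewrite inE /gpsi /= dom_pr0 inE setU0 HI.
have : ~~ Pe e s by apply/negP=> /Hmin; rewrite ltnn.
rewrite /Pe /S /Vset in_set; case: (e \in dom (gpsi s.+1)); case: (I (e |: dom (gpsi s.+1))) => //.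
Qed.

Lemma sig_lt e : I [set e] -> (sig e < N)%N.
Proof.
move=> HI; have HV := sig_V HI; rewrite ltnNge; apply/negP=> Hle.
by move: HV; rewrite (gpsi_after Hle) VN inE.
Qed.

Lemma sig_P e t : (sig e < t)%N -> (e \in S t) || ~~ I (e |: S t).
Proof.
move=> Ht; have : Pe e (sig e) by rewrite /sig; case: ex_minnP.
have Hs := S_sub Ht.
case/orP=> [H|H]; first by rewrite (subsetP Hs _ H).
apply/orP; right; apply: contra H; apply: I_down; exact: setUS.
Qed.

Lemma Delta_bound e psi : I [set e] -> feasible p psi -> subpr (gpsi N) psi ->
  e \notin dom psi -> fwc_e p f e psi <= Delta (sig e).
Proof.
move=> HI Hf Hs He.
have Hs' : subpr (gpsi (sig e)) psi.
  apply: subpr_trans Hs; apply: gpsi_sub; apply: ltnW; exact: sig_lt.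
apply: le_trans (Hsub (gpsi_feas _) Hf Hs' He) _.
have HV := sig_V HI; rewrite /Delta.
case H: (pi (gpsi (sig e))) => [g|].
  by case: (gSome H) => _ _ _; apply.
have [[H1 _] _] := greedyP (gpsi_feas (sig e)).
by move: HV; rewrite (H1 H) inE.
Qed.

Lemma count_bound k (Hk : forall Rs B1 B2, is_base I Rs B1 -> is_base I Rs B2 ->
    (#|B2| <= k * #|B1|)%N) (A : {set E}) :
  I A -> forall i, (#|[set e in A | (sig e < i)%N]| <= k * i)%N.
Proof.
move=> HA i; set X := [set e in A | _].
set Rs := S i :|: X.
have HXA : X \subset A by apply/subsetP=> e; rewrite inE => /andP [].
have HIX : I X by apply: I_down HXA HA.
have Hb1 : is_base I Rs (S i).
  split; first exact: subsetUl.
  split; first exact: S_ind.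
  move=> B' H1 H2 H3; apply/eqP; rewrite eqEsubset H1 andbT.
  apply/subsetP=> x Hx; move: (subsetP H2 _ Hx); rewrite inE => /orP [//|].
  rewrite inE => /andP [_ Hsx]; case/orP: (sig_P Hsx) => // HnI.
  exfalso; move/negP: HnI; apply; apply: I_down H3.
  apply/subsetP=> y; rewrite in_setU1 => /orP [/eqP -> //|Hy]; exact: (subsetP H1).
pose P (B : {set E}) := [&& X \subset B, B \subset Rs & I B].
have HP : P X by rewrite /P subxx subsetUr HIX.
case: (@arg_maxnP _ X P (fun B : {set E} => #|B|) HP) => B2 /and3P [HXB HBR HIB] Hmax.
have Hb2 : is_base I Rs B2.
  split => //; split => // B' H1 H2 H3.
  have HPB' : P B' by rewrite /P (subset_trans HXB H1) H2 H3.
  have := Hmax _ HPB'; move=> Hc.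
  by apply/eqP; rewrite eq_sym eqEcard H1; exact: Hc.
have := Hk _ _ _ Hb1 Hb2.
have := subset_leq_card HXB.
have := S_card i.
move=> h1 h2 h3; apply: leq_trans h2 _; apply: leq_trans h3 _; exact: leq_mul.
Qed.


Variable piopt : policy E O.
Local Notation G0 := (gpsi N).

Definition worst (c : prealization E O) e :=
  odflt (phi e) [pick o in Oset p e c | marg p f e c o == fwc_e p f e c].

Lemma worst_spec c e : feasible p c ->
  worst c e \in Oset p e c /\ marg p f e c (worst c e) = fwc_e p f e c.
Proof.
move=> Hc; have [phi0 /andP [H1 H2]] := feasible_ex p_ge0 Hc.
have Ho : phi0 e \in Oset p e c.
  rewrite inE; apply/existsP; exists phi0; rewrite eqxx andbT /cond_prob H1.
  by rewrite divr_gt0.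
rewrite /worst; case: pickP => [o /andP [Ho' /eqP Hm] //|H].
have [o' Ho' Hm] := fwc_attained f Ho.
by move: (H o'); rewrite Ho' Hm eqxx.
Qed.

Definition cstep (st : prealization E O * prealization E O) :=
  let (c, w) := st in
  match piopt w with
  | Some e => if e \in dom w then (c, w) else
      let o := if c e is Some o then o else worst c e in (extend c e o, extend w e o)
  | None => (c, w)
  end.

Definition cs j := iter j cstep (G0, pr0 E O).

Definition Inv (st : prealization E O * prealization E O) :=
  [/\ feasible p st.1, subpr st.2 st.1, subpr G0 st.1 & dom st.1 = dom G0 :|: dom st.2].

Lemma subpr_extend2 (w c : prealization E O) e o :
  subpr w c -> subpr (extend w e o) (extend c e o).
Proof.
move=> /forallP H; apply/forallP=> x; rewrite !ffunE; case: eqP => // _; exact: H.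
Qed.

Lemma subpr_extend_l (w c : prealization E O) e o :
  subpr w c -> c e = Some o -> subpr (extend w e o) c.
Proof.
move=> H Hc; rewrite -(extend_id Hc); exact: subpr_extend2.
Qed.

Lemma Inv_cs j : Inv (cs j).
Proof.
elim: j => [|j IH].
  rewrite /Inv /cs /=; split; first exact: gpsi_feas.
  - by apply/forallP=> x; rewrite ffunE.
  - exact: subpr_refl.
  - by rewrite dom_pr0 setU0.
rewrite /cs iterS -/(cs j); move: IH; case: (cs j) => c w [Hf Hwc HGc Hd] /=.
case: (piopt w) => [e|] //; case: ifP => // Hew.
case Hce: (c e) => [o|].
  have Hdc : e \in dom c by rewrite in_dom Hce.
  rewrite (extend_id Hce); split => //=; first exact: subpr_extend_l.
  rewrite dom_extend setUCA -Hd; symmetry; apply/setUidPr; by rewrite sub1set.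
have [Ho Hm] := worst_spec e Hf.
split => /=.
- exact: Oset_feasible.
- exact: subpr_extend2.
- by apply: subpr_trans HGc (subpr_extend _); rewrite Hce.
- by rewrite !dom_extend Hd setUCA.
Qed.

Lemma cs_sub1 j : subpr (cs j).1 (cs j.+1).1 /\ subpr (cs j).2 (cs j.+1).2.
Proof.
rewrite /cs iterS -/(cs j); case: (cs j) => c w /=.
case: (piopt w) => [e|] /=; last by split; exact: subpr_refl.
case: ifP => Hew /=; first by split; exact: subpr_refl.
case Hce: (c e) => [o|]; split; apply: subpr_extend.
- by rewrite Hce eqxx orbT.
- by move: Hew; rewrite in_dom => /negbT; rewrite negbK => ->.
- by rewrite Hce.
- by move: Hew; rewrite in_dom => /negbT; rewrite negbK => ->.
Qed.

Lemma cs_sub j s : (j <= s)%N -> subpr (cs j).1 (cs s).1 /\ subpr (cs j).2 (cs s).2.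
Proof.
move/subnK <-; elim: (s - j)%N => [|m [IH1 IH2]]; first by split; exact: subpr_refl.
rewrite addSn; case: (cs_sub1 (m + j)) => H1 H2; split.
  exact: subpr_trans IH1 H1.
exact: subpr_trans IH2 H2.
Qed.

Section Final.
Variable phi' : realization E O.
Hypothesis Hphi'c : consistent phi' (cs N).1.

Lemma run_opt j : (j <= N)%N -> iter j (step piopt phi') (pr0 E O) = (cs j).2.
Proof.
elim: j => [|j IH] Hj //.
rewrite iterS IH ?(ltnW Hj) //.
have Hc1 : consistent phi' (cs j.+1).1.
  by apply: consistent_sub Hphi'c; case: (cs_sub Hj).
have Hc0 : consistent phi' (cs j).1.
  by apply: consistent_sub Hc1; case: (cs_sub1 j).
have [_ Hwc _ _] := Inv_cs j.
move: Hc1; rewrite /cs iterS -/(cs j); move: Hc0 Hwc.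
case: (cs j) => c w /= Hc0 Hwc; rewrite /step.
case: (piopt w) => [e|] //; case: ifP => Hew /=.
  move=> _; move: Hew; rewrite in_dom; case Hwe: (w e) => [o|] // _.
  apply: extend_id; rewrite Hwe; congr Some.
  symmetry; apply: consistentP (consistent_sub Hwc Hc0) Hwe.
move=> Hc1; congr extend.
by apply: consistentP Hc1 _; rewrite ffunE eqxx.
Qed.

End Final.


Lemma sum_subset (A B : {set E}) (F : E -> R) :
  A \subset B -> (forall e, 0 <= F e) -> \sum_(e in A) F e <= \sum_(e in B) F e.
Proof.
move=> HAB HF; rewrite [X in _ <= X](big_setID A) /= (setIidPr HAB) lerDl.
by apply: sumr_ge0.
Qed.

Section Value.
Hypothesis HIO : I (dom (cs N).2).

Lemma val_bound j : (j <= N)%N ->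
  condf p f (dom (cs j).1) (cs j).1 - condf p f (dom G0) G0 <=
  \sum_(e in dom (cs j).1 :\: dom G0) Delta (sig e).
Proof.
elim: j => [|j IH] Hj.
  by rewrite /cs /= subrr setDv big_set0.
have IH' := IH (ltnW Hj).
have Hw : dom (cs j.+1).2 \subset dom (cs N).2.
  by apply: subpr_dom; case: (cs_sub Hj).
have [Hf _ HGc _] := Inv_cs j.
move: Hw IH'; rewrite /cs iterS -/(cs j); move: Hf HGc.
case: (cs j) => c w /= Hf HGc.
case: (piopt w) => [e|] //; case: ifP => Hew //=.
case Hce: (c e) => [o|]; first by rewrite (extend_id Hce).
move=> Hw IH'.
have Hec : e \notin dom c by rewrite in_dom Hce.
have HeG : e \notin dom G0 by apply: contra Hec; apply: (subsetP (subpr_dom HGc)).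
have HI1 : I [set e].
  apply: I_down HIO; rewrite sub1set; apply: (subsetP Hw).
  by rewrite dom_extend setU11.
have [Ho Hm] := worst_spec e Hf.
have HD := Delta_bound HI1 Hf HGc Hec.
have -> : dom (extend c e (worst c e)) :\: dom G0 = e |: (dom c :\: dom G0).
  by rewrite dom_extend setDUl; congr (_ :|: _); apply/setDidPl; rewrite disjoints1.
rewrite big_setU1 /=; last by rewrite inE negb_and Hec orbT.
move: Hm HD; rewrite /marg dom_extend => Hm HD.
lra.
Qed.

End Value.

Lemma fwc_pol_le (pi' : policy E O) phi' : 0 < p phi' ->
  fwc_pol p f pi' <= f (selected pi' phi') phi'.
Proof.
move=> H; rewrite /fwc_pol; case: pickP => [phi0 H0|Hn]; last by move: (Hn phi'); rewrite H.
exact: (bigmin_le_cond _ (fun phi => f (selected pi' phi) phi) H).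
Qed.

Lemma phi_bound k (Hk : forall Rs B1 B2, is_base I Rs B1 -> is_base I Rs B2 ->
    (#|B2| <= k * #|B1|)%N) (Hadm : admissible p I piopt) :
  fwc_pol p f piopt <= (k.+1)%:R * f (S N) phi.
Proof.
have [Hf _ _ Hd] := Inv_cs N.
have [phi' /andP [Hc Hp']] := feasible_ex p_ge0 Hf.
have Hrun : run piopt phi' = (cs N).2 := run_opt Hc (leqnn N).
have HIO : I (dom (cs N).2) by move: (Hadm phi' Hp'); rewrite /selected Hrun.
have H1 : fwc_pol p f piopt <= f (dom (cs N).2) phi'.
  by move: (fwc_pol_le piopt Hp'); rewrite /selected Hrun.
have H2 : f (dom (cs N).2) phi' <= f (dom (cs N).1) phi'.
  by apply: (mono p_ge0 Hmon Hmd) => //; rewrite Hd subsetUr.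
have H3 := condf_md p_ge0 Hmd Hc Hp'.
have H4 := val_bound HIO (leqnn N).
have H5 := condf_md p_ge0 Hmd (gpsi_cons N) Hp.
have H6 : \sum_(e in dom (cs N).1 :\: dom G0) Delta (sig e) <=
          \sum_(e in dom (cs N).2) Delta (sig e).
  apply: sum_subset => [|e]; last exact: Delta_ge0.
  by apply/subsetP=> x; rewrite Hd !inE => /andP [/negbTE -> ].
have Hsl : forall e, e \in dom (cs N).2 -> (sig e < N)%N.
  move=> e He; apply: sig_lt; apply: I_down HIO; by rewrite sub1set.
have H7 := @abel E R (dom (cs N).2) sig Delta k N Delta_ge0 Delta_noninc Hsl
   (fun i _ => count_bound Hk HIO i).
have H8 := greedy_value.
have H9 : k%:R * \sum_(t < N) Delta t <= k%:R * f (S N) phi.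
  by apply: ler_wpM2l => //; apply: ler0n.
move: H1 H2 H3 H4 H5 H6 H7 H8 H9; rewrite -/(S N) -[(k.+1)%:R]natr1.
set a := fwc_pol _ _ _; set b := f _ phi'; set c := f _ phi'; set s := \sum_(t < N) _.
move=> H1 H2 H3 H4 H5 H6 H7 H8 H9.
lra.
Qed.

End Greedy.

Unset Implicit Arguments.
Set Strict Implicit.

Theorem theorem1 (E O : finType) (R : realFieldType)
  (I : pred {set E}) (k : nat)
  (p : {ffun E -> O} -> R) (f : {set E} -> {ffun E -> O} -> R)
  (pi_w pi_opt : {ffun E -> option O} -> option E) :
  (1 <= k)%N ->
  k_system I k ->
  is_prior p ->
  (forall S phi, 0 <= f S phi) ->
  wc_monotone p f ->
  wc_submodular p f ->
  minimal_dependency p f ->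
  wc_greedy p f I pi_w ->
  optimal_wc_policy p f I pi_opt ->
  fwc_pol p f pi_opt / (k.+1)%:R <= fwc_pol p f pi_w.
Proof.
move=> _ [Hind Hk] [Hp0 _] f0 Hmon Hsub Hmd Hg [Hadm _].
have key : forall phi, 0 < p phi ->
    fwc_pol p f pi_opt / (k.+1)%:R <= f (selected pi_w phi) phi.
  move=> phi Hp; rewrite ler_pdivrMr ?ltr0Sn // mulrC.
  exact: (phi_bound Hp0 f0 Hmon Hsub Hmd Hind Hg Hp Hk Hadm).
rewrite [X in _ <= X]/fwc_pol; case: pickP => [phi0 H0|Hn].
  apply: le_bigmin; first exact: key.
  by move=> i Hi; apply: key.
rewrite /fwc_pol; case: pickP => [phi1 H1|_]; first by move: (Hn phi1); rewrite H1.
by rewrite mul0r.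
Qed.
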